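(* Let $n\ge0$. For every Motzkin path $\gamma$ of length $n$, in the poset $\mathcal{M}_n$ we have $|\Delta\gamma|=\omega_{HU}(\gamma)+\omega_{DH}(\gamma)+\omega_{DU}(\gamma)+\omega_{HH}(\gamma)$ and $|\nabla\gamma|=\omega_{UH}(\gamma)+\omega_{HD}(\gamma)+\omega_{UD}(\gamma)+\omega^*_{HH}(\gamma)$. For every Grand Motzkin path $\gamma$ of length $n$, in the poset $\mathcal{GM}_n$ we have $|\Delta\gamma|=\omega_{HU}(\gamma)+\omega_{DH}(\gamma)+\omega_{DU}(\gamma)+\omega_{HH}(\gamma)$ and $|\nabla\gamma|=\omega_{UH}(\gamma)+\omega_{HD}(\gamma)+\omega_{UD}(\gamma)+\omega_{HH}(\gamma)$.
   Context: Steps: $U=(1,1)$, $D=(1,-1)$, $H=(1,0)$. A Grand Motzkin path of length $n$ is a lattice path from $(0,0)$ to $(n,0)$ with steps $U,D,H$; a Motzkin path is a Grand Motzkin path never going below the $x$-axis. $\mathcal{M}_n$ (resp. $\mathcal{GM}_n$) is the set of Motzkin (resp. Grand Motzkin) paths of length $n$, partially ordered by $\gamma_1\le\gamma_2$ iff $\gamma_1$ lies weakly below $\gamma_2$. $\Delta x$ is the set of elements covering $x$, $\nabla x$ the set of elements covered by $x$. Paths are identified with words of steps; $\omega_\alpha(\gamma)$ is the number of occurrences of the word $\alpha$ as a factor (contiguous subword, overlapping occurrences counted separately) of $\gamma$; $\omega^*_{HH}(\gamma)$ is the number of occurrences of the factor $HH$ not lying on the $x$-axis. *)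

(* Defs.v *)
From HB Require Import structures.
From mathcomp Require Import all_boot all_order all_algebra.
Set Implicit Arguments. Unset Strict Implicit. Unset Printing Implicit Defensive.
Import GRing.Theory Num.Theory.

(* Steps U=(1,1), D=(1,-1), H=(1,0). *)
Inductive step := U | D | H.

Definition step_code (s : step) : 'I_3 :=
  match s with U => @Ordinal 3 0 isT | D => @Ordinal 3 1 isT | H => @Ordinal 3 2 isT end.
Definition step_decode (i : 'I_3) : step :=
  match val i with 0 => U | 1 => D | _ => H end.
Lemma step_codeK : cancel step_code step_decode. Proof. by case. Qed.
HB.instance Definition _ := Finite.copy step (can_type step_codeK).

Definition stepv (s : step) : int :=
  match s with U => 1%R | D => (-1)%R | H => 0%R end.

Definition height (s : seq step) (k : nat) : int :=
  (\sum_(x <- take k s) stepv x)%R.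

Definition grand_motzkin (s : seq step) : bool := height s (size s) == 0%R.
Definition motzkin (s : seq step) : bool :=
  grand_motzkin s && all (fun k => (0 <= height s k)%R) (iota 0 (size s).+1).

Definition path_le n (g1 g2 : n.-tuple step) : bool :=
  [forall k : 'I_n.+1, (height g1 k <= height g2 k)%R].
Definition path_lt n (g1 g2 : n.-tuple step) : bool :=
  (g1 != g2) && path_le g1 g2.

Definition covers n (P : pred (n.-tuple step)) (x y : n.-tuple step) : bool :=
  [&& P x, P y, path_lt x y &
      ~~ [exists z : n.-tuple step, [&& P z, path_lt x z & path_lt z y]]].

(* Delta x : elements covering x ; Nabla x : elements covered by x *)
Definition upper_covers n (P : pred (n.-tuple step)) (x : n.-tuple step) :=
  [set y : n.-tuple step | covers P x y].
Definition lower_covers n (P : pred (n.-tuple step)) (x : n.-tuple step) :=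
  [set y : n.-tuple step | covers P y x].

(* number of occurrences of the word a as a factor of s (overlaps counted) *)
Definition occ (a s : seq step) : nat :=
  count (fun i => take (size a) (drop i s) == a) (iota 0 (size s)).

Definition occ_HH_star (s : seq step) : nat :=
  count (fun i => (take 2 (drop i s) == [:: H; H]) && (height s i != 0%R))
        (iota 0 (size s)).

(* Main.v *)
Require Import Defs.
From mathcomp Require Import all_boot all_order all_algebra.
From mathcomp Require Import zify.
Set Implicit Arguments. Unset Strict Implicit. Unset Printing Implicit Defensive.
Import Order.TTheory GRing.Theory Num.Theory.

Lemma card_ordP n (p : pred nat) :
  #|[pred i : 'I_n | p (val i)]| = count p (iota 0 n).
Proof.
by rewrite cardE /enum_mem size_filter -enumT -val_enum_ord count_map.
Qed.

Definition sumv (l : seq step) : int := (\sum_(x <- l) stepv x)%R.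

Lemma heightE s k : height s k = sumv (take k s). Proof. by []. Qed.

Lemma height0 s : height s 0 = 0%R.
Proof. by rewrite heightE take0 /sumv big_nil. Qed.

Lemma heightS s j : j < size s ->
  height s j.+1 = (height s j + stepv (nth H s j))%R.
Proof. by move=> hj; rewrite !heightE (take_nth H hj) /sumv -cats1 big_cat big_seq1. Qed.

Lemma heightS' s j : size s <= j -> height s j.+1 = height s j.
Proof. by move=> hj; rewrite !heightE !take_oversize // (leq_trans hj). Qed.

Lemma stepv_inj : injective stepv. Proof. by case; case. Qed.

Lemma height_inj s t : size s = size t ->
  (forall k, k <= size s -> height s k = height t k) -> s = t.
Proof.
move=> hs hk; apply: (eq_from_nth (x0:=H) hs) => i hi.
apply: stepv_inj.
have e1 := heightS hi. have e2 := @heightS t i; rewrite -hs in e2.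
have := e2 hi; rewrite -hk; last exact: hi. rewrite -hk; last exact: ltnW hi. move=> e3.
by apply: (addrI (height s i)); rewrite -e1 e3.
Qed.

Lemma stepv_bound a : (-1 <= stepv a <= 1)%R. Proof. by case a. Qed.

Definition inc a := match a with D => H | _ => U end.
Definition dec a := match a with U => H | _ => D end.

Definition flip_up (s : seq step) i :=
  match drop i s with a :: b :: t => take i s ++ inc a :: dec b :: t | _ => s end.
Definition pat_up (s : seq step) i :=
  match drop i s with a :: b :: _ => (a != U) && (b != D) | _ => false end.

Lemma sumv_cons a l : sumv (a :: l) = (stepv a + sumv l)%R.
Proof. by rewrite /sumv big_cons. Qed.

Lemma size_flip s i : size (flip_up s i) = size s.
Proof.
rewrite /flip_up; case e: (drop i s) => [|a [|b t]] //.
have := size_drop i s; rewrite e /= => hs.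
by rewrite size_cat size_take /=; case: ifP; lia.
Qed.

Lemma height_flip s i : pat_up s i -> forall k,
  height (flip_up s i) k = (height s k + (k == i.+1)%:Z)%R.
Proof.
rewrite /pat_up /flip_up; case e: (drop i s) => [|a [|b t]] // /andP[ha hb] k.
have := size_drop i s; rewrite e /= => hs.
have hp : size (take i s) = i by rewrite size_take; case: ifP; lia.
rewrite -[s in RHS](cat_take_drop i s) e !heightE !take_cat hp.
case: ltnP => hk.
  have -> : (k == i.+1) = false by lia.
  by rewrite addr0.
rewrite /sumv !big_cat /= -/(sumv _) -/(sumv _) -/(sumv _) -/(sumv _).
have [m ->] : exists m, k = i + m by exists (k - i); lia.
rewrite addKn.
case: m => [|[|m]] /=.
- have -> : (i + 0 == i.+1) = false by lia.
  by rewrite addr0.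
- rewrite addn1 eqxx !sumv_cons /sumv big_nil !addr0 -addrA; congr (_ + _)%R.
  by clear e; case: a ha.
- have -> : (i + m.+2 == i.+1) = false by lia.
  rewrite !sumv_cons addr0 !addrA -(addrA _ (stepv (inc a))) -(addrA _ (stepv a)); congr (_ + _ + _)%R.
  by clear e; case: a ha; case: b hb.
Qed.

Definition Pc (c : pred int) (s : seq step) :=
  grand_motzkin s && all (fun k => c (height s k)) (iota 0 (size s).+1).
Definition valid (c : pred int) (s : seq step) i :=
  pat_up s i && c (height s i.+1 + 1)%R.

Lemma pat_up_size s i : pat_up s i -> i.+1 < size s.
Proof.
rewrite /pat_up; case e: (drop i s) => [|a [|b t]] // _.
have := size_drop i s; rewrite e /=; lia.
Qed.

Lemma pat_upE s i : i.+1 < size s ->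
  pat_up s i = (nth H s i != U) && (nth H s i.+1 != D).
Proof.
move=> hi; rewrite /pat_up (drop_nth H (ltnW hi)) (drop_nth H hi) //.
Qed.

Lemma Pc_height c s k : Pc c s -> k <= size s -> c (height s k).
Proof.
case/andP=> _ /allP h hk; apply: h; rewrite mem_iota; lia.
Qed.

Lemma Pc_flip c s i : Pc c s -> valid c s i -> Pc c (flip_up s i).
Proof.
move=> hP /andP[hp hc].
have hs := pat_up_size hp.
apply/andP; split.
  rewrite /grand_motzkin size_flip height_flip //.
  have -> : (size s == i.+1) = false by lia.
  by rewrite addr0; case/andP: hP.
apply/allP => k; rewrite mem_iota size_flip height_flip // => hk.
case: eqP => [->|_]; first by [].
by rewrite addr0; apply: Pc_height hP _; lia.
Qed.

Definition flipT n (x : n.-tuple step) i : n.-tuple step :=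
  @Tuple n step (flip_up x i) (introT eqP (etrans (size_flip x i) (size_tuple x))).

Lemma path_leP n (g1 g2 : n.-tuple step) :
  reflect (forall k, k <= n -> (height g1 k <= height g2 k)%R) (Defs.path_le g1 g2).
Proof.
apply: (iffP forallP) => h k.
- by move=> hk; exact: (h (Ordinal (hk : k < n.+1))).
- exact: h k (ltn_ord k).
Qed.

Lemma tuple_heights n (x y : n.-tuple step) :
  (forall k, k <= n -> height x k = height y k) -> x = y.
Proof.
move=> h; apply: val_inj; apply: height_inj; first by rewrite !size_tuple.
by move=> k; rewrite size_tuple; apply: h.
Qed.

Lemma lt_flip n (x : n.-tuple step) c i : valid c x i -> path_lt x (flipT x i).
Proof.
case/andP=> hp _; have hs := pat_up_size hp; rewrite size_tuple in hs.
apply/andP; split.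
  apply/eqP => /(congr1 (fun z : n.-tuple step => height z i.+1)).
  rewrite /= height_flip // eqxx => /eqP; rewrite -subr_eq0 opprD addrA subrr.
  by rewrite add0r oppr_eq0.
apply/path_leP => k _; rewrite /= height_flip // lerDl; by case: (_ == _).
Qed.

Lemma covers_flip n c (x : n.-tuple step) i :
  Pc c x -> valid c x i -> covers (fun z : n.-tuple step => Pc c z) x (flipT x i).
Proof.
move=> hx hv; have hp : pat_up x i by case/andP: hv.
have hs := pat_up_size hp; rewrite size_tuple in hs.
rewrite /covers hx Pc_flip // (lt_flip hv) /=.
apply/existsP => -[z /and3P[hz hxz hzy]].
case/andP: hxz => nxz /path_leP lxz; case/andP: hzy => nzy /path_leP lzy.
have hz_eq : forall k, k <= n -> k != i.+1 -> height z k = height x k.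
  move=> k hk ne; apply/eqP; rewrite eq_le lxz // andbT.
  by have := lzy k hk; rewrite /= height_flip // (negbTE ne) addr0.
have h1 := lxz i.+1 (ltnW hs); have h2 := lzy i.+1 (ltnW hs); rewrite /= height_flip // ?eqxx in h2.
case: (eqVneq (height z i.+1) (height x i.+1)) => e.
- apply: (negP nxz); apply/eqP; symmetry; apply: tuple_heights => k hk.
  by case: (eqVneq k i.+1) => [->|ne]; [exact: e | exact: hz_eq].
- apply: (negP nzy); apply/eqP; apply: tuple_heights => k hk.
  rewrite /= height_flip //; case: (eqVneq k i.+1) => [->|ne].
    rewrite ?eqxx (_ : Posz (true:nat) = 1%R) // in h2 *.
    by apply/eqP; rewrite eq_le h2 lezD1 lt_neqAle h1 andbT eq_sym.
  by rewrite addr0 hz_eq.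
Qed.

Definition convex (c : pred int) :=
  forall a b m, c a -> c b -> (a <= m)%R -> (m <= b)%R -> c m.

Lemma heightS_le s j : (height s j.+1 <= height s j + 1)%R /\ (height s j <= height s j.+1 + 1)%R.
Proof.
case: (ltnP j (size s)) => hj.
  rewrite heightS //; have /andP[] := stepv_bound (nth H s j); lia.
rewrite heightS' //; lia.
Qed.

Lemma covers_inv n c (x y : n.-tuple step) : convex c -> Pc c x ->
  covers (fun z : n.-tuple step => Pc c z) x y -> exists2 i, valid c x i & y = flipT x i.
Proof.
move=> hc hx /and4P[_ hy /andP[nxy /path_leP lxy] hno].
have [k0 hk0] : exists k0 : 'I_n.+1, (height x k0 < height y k0)%R.
  case: (pickP [pred k : 'I_n.+1 | height x k < height y k]%R) => [k0 hk0|h0].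
    by exists k0.
  exfalso; apply: (negP nxy); apply/eqP; apply: tuple_heights => k hk.
  have := h0 (Ordinal (hk : k < n.+1)); rewrite /= => /negbT; rewrite -leNgt => hyx.
  by apply/eqP; rewrite eq_le hyx lxy.
have := @arg_minP _ _ 'I_n.+1 k0 (fun k : 'I_n.+1 => height x k < height y k)%R
  (fun k => height x k) hk0.
case=> k hk hmin.
have kpos : 0 < k.
  case: (posnP k) => // k0'; move: hk; rewrite k0' !height0; by rewrite ltxx.
have gx : height x n = 0%R by case/andP: hx => /eqP; rewrite size_tuple.
have gy : height y n = 0%R by case/andP: hy => /eqP; rewrite size_tuple.
have kn : k < n.
  rewrite ltn_neqAle -ltnS ltn_ord andbT; apply/eqP => kn; move: hk.
  by rewrite kn gx gy ltxx.
have [i ki] : exists i, nat_of_ord k = i.+1 by exists k.-1; rewrite prednK.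
have hkn : k <= n by apply: ltnW.
have nb : forall j, j <= n -> (height y i.+1 <= height y j + 1)%R ->
    (height x i.+1 <= height x j)%R.
  move=> j hj hyj; case hxy: (height x j < height y j)%R.
    by rewrite -ki; exact: (hmin (Ordinal (hj : j < n.+1)) hxy).
  move/negbT: hxy; rewrite -leNgt => hyx; move: hk; rewrite ki => hk; lia.
have hs : i.+1 < size x by rewrite size_tuple -ki.
have hin : i <= n by lia.
have hv : valid c x i.
  apply/andP; split.
    rewrite pat_upE //; apply/andP; split; apply/negP => /eqP ea.
      case: (heightS_le y i) => hy1 _; have := nb i hin hy1.
      by rewrite (@heightS x i) ?ea /=; lia.
    have hi2 : i.+2 <= n by rewrite size_tuple in hs.
    case: (heightS_le y i.+1) => _ hy1; have := nb i.+2 hi2 hy1.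
    by rewrite (@heightS x i.+1) ?ea /= ?size_tuple //; lia.
  apply: (hc (height x i.+1) (height y i.+1)).
  - by apply: Pc_height hx _; rewrite size_tuple -ki.
  - by apply: Pc_height hy _; rewrite size_tuple -ki.
  - by rewrite lerDl.
  - by move: hk; rewrite ki lezD1.
exists i => //.
apply/eqP; apply: contraNT hno => nyz; apply/existsP; exists (flipT x i).
rewrite Pc_flip // (lt_flip hv) /=; apply/andP; split; first by rewrite eq_sym.
have hp : pat_up x i by case/andP: hv.
apply/path_leP => j hj; rewrite /= height_flip //; case: eqP => [->|_].
  by move: hk; rewrite ki -lezD1.
by rewrite addr0 lxy.
Qed.

Lemma card_upper n c (x : n.-tuple step) : convex c -> Pc c x ->
  #|upper_covers (fun z : n.-tuple step => Pc c z) x| = count (valid c x) (iota 0 n).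
Proof.
move=> hc hx; rewrite -card_ordP.
have -> : upper_covers (fun z : n.-tuple step => Pc c z) x =
    [set flipT x (nat_of_ord i) | i : 'I_n in [pred i : 'I_n | valid c x i]].
  apply/setP => y; rewrite inE; apply/idP/imsetP.
    move/(covers_inv hc hx) => [i hv ->].
    have hi : i < n by have := pat_up_size (proj1 (andP hv)); rewrite size_tuple; lia.
    by exists (Ordinal hi).
  by case=> i hi ->; apply: covers_flip.
rewrite card_in_imset // => i j hi hj e.
have hpi : pat_up x i by case/andP: hi.
have hpj : pat_up x j by case/andP: hj.
have := congr1 (fun z : n.-tuple step => height z i.+1) e.
rewrite /= !height_flip // eqxx => /addrI.
by case: (eqVneq (i.+1) j.+1) => [/eqP|] //; rewrite eqSS => /eqP /val_inj.
Qed.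

Lemma upper_ext n (P Q : pred (n.-tuple step)) x : P =1 Q ->
  upper_covers P x = upper_covers Q x.
Proof.
move=> hPQ; apply/setP => y; rewrite !inE /covers !hPQ; congr [&& _, _, _ & ~~ _].
by apply: eq_existsb => z; rewrite hPQ.
Qed.

Lemma lower_ext n (P Q : pred (n.-tuple step)) x : P =1 Q ->
  lower_covers P x = lower_covers Q x.
Proof.
move=> hPQ; apply/setP => y; rewrite !inE /covers !hPQ; congr [&& _, _, _ & ~~ _].
by apply: eq_existsb => z; rewrite hPQ.
Qed.

Lemma count_add4 (T : eqType) (p q1 q2 q3 q4 : pred T) (s : seq T) :
  {in s, forall i, (p i : nat) = q1 i + q2 i + q3 i + q4 i} ->
  count p s = count q1 s + count q2 s + count q3 s + count q4 s.
Proof.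
elim: s => //= a s IH h.
rewrite h ?mem_head // IH; last by move=> i hi; apply: h; rewrite in_cons hi orbT.
lia.
Qed.

Lemma GM_Pc s : grand_motzkin s = Pc predT s.
Proof. by rewrite /Pc; case: (grand_motzkin s) => //=; elim: (iota _ _). Qed.

Definition swap a := match a with U => D | D => U | H => H end.
Lemma swapK : involutive swap. Proof. by case. Qed.
Definition negT n (x : n.-tuple step) : n.-tuple step := map_tuple swap x.
Lemma negTK n : involutive (@negT n).
Proof. by move=> x; apply: val_inj; rewrite /= -map_comp (eq_map swapK) map_id. Qed.

Lemma height_neg s k : height (map swap s) k = (- height s k)%R.
Proof.
rewrite !heightE -map_take /sumv big_map -sumrN; apply: eq_bigr => a _; by case: a.
Qed.

Lemma Pc_neg c s : Pc c (map swap s) = Pc (fun h => c (- h)%R) s.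
Proof.
rewrite /Pc /grand_motzkin size_map !height_neg oppr_eq0; congr (_ && _).
by apply: eq_all => k; rewrite height_neg.
Qed.

Lemma path_le_neg n (a b : n.-tuple step) :
  Defs.path_le (negT a) (negT b) = Defs.path_le b a.
Proof.
apply/path_leP/path_leP => h k hk; have := h k hk; by rewrite /= !height_neg lerN2.
Qed.

Lemma path_lt_neg n (a b : n.-tuple step) :
  path_lt (negT a) (negT b) = path_lt b a.
Proof.
by rewrite /path_lt path_le_neg (inj_eq (can_inj (@negTK n))) eq_sym.
Qed.

Lemma covers_neg n (P : pred (n.-tuple step)) x y :
  covers P y x = covers (fun z => P (negT z)) (negT x) (negT y).
Proof.
rewrite /covers !negTK !path_lt_neg andbCA; congr [&& _, _, _ & ~~ _].
apply/existsP/existsP => -[z hz].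
  exists (negT z); rewrite negTK !path_lt_neg.
  by case/and3P: hz => h1 h2 h3; apply/and3P.
exists (negT z); case/and3P: hz => h1 h2 h3; apply/and3P; split => //.
  by rewrite -path_lt_neg negTK.
by rewrite -path_lt_neg negTK.
Qed.

Lemma card_lower n (P : pred (n.-tuple step)) x :
  #|lower_covers P x| = #|upper_covers (fun z => P (negT z)) (negT x)|.
Proof.
rewrite -(card_preimset _ (can_inj (@negTK n))).
by apply: eq_card => y; rewrite !inE covers_neg negTK.
Qed.

Lemma Pc_ext c c' s : c =1 c' -> Pc c s = Pc c' s.
Proof. by move=> h; rewrite /Pc; congr (_ && _); apply: eq_all => k; rewrite h. Qed.

Lemma convex_ge0 : convex (fun h : int => 0 <= h)%R.
Proof. move=> a b m /= ha hb h1 h2; lia. Qed.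
Lemma convex_le0 : convex (fun h : int => 0 <= - h)%R.
Proof. move=> a b m /= ha hb h1 h2; lia. Qed.
Lemma convex_T : convex predT. Proof. by []. Qed.

Lemma motzkin_up n (g : n.-tuple step) : motzkin g ->
  #|upper_covers (fun x : n.-tuple step => motzkin x) g|
       = occ [:: H; U] g + occ [:: D; H] g + occ [:: D; U] g + occ [:: H; H] g.
Proof.
move=> hg.
have E := @card_upper n (fun h : int => 0 <= h)%R g convex_ge0 hg.
etransitivity; first exact: E.
rewrite /occ size_tuple; apply: count_add4 => i; rewrite mem_iota => /andP[_ hi].
have h0 : (0 <= height g i.+1)%R by apply: (Pc_height hg); rewrite size_tuple.
rewrite /valid /pat_up; case: (drop i g) => [|a [|b t]]; first by [].
  by case: a.
have -> : (0 <= height g i.+1 + 1)%R by lia.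
by case: a; case: b; rewrite /= ?take0.
Qed.

Lemma gm_up n (g : n.-tuple step) : grand_motzkin g ->
  #|upper_covers (fun x : n.-tuple step => grand_motzkin x) g|
       = occ [:: H; U] g + occ [:: D; H] g + occ [:: D; U] g + occ [:: H; H] g.
Proof.
move=> hg; rewrite GM_Pc in hg.
rewrite (@upper_ext n _ (fun z : n.-tuple step => Pc predT z)); last by move=> z; rewrite GM_Pc.
rewrite (card_upper convex_T hg).
rewrite /occ size_tuple; apply: count_add4 => i; rewrite mem_iota => /andP[_ hi].
rewrite /valid /pat_up; case: (drop i g) => [|a [|b t]]; first by [].
  by case: a.
by case: a; case: b; rewrite /= ?take0.
Qed.

Lemma gm_down n (g : n.-tuple step) : grand_motzkin g ->
  #|lower_covers (fun x : n.-tuple step => grand_motzkin x) g|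
       = occ [:: U; H] g + occ [:: H; D] g + occ [:: U; D] g + occ [:: H; H] g.
Proof.
move=> hg; rewrite card_lower.
rewrite (@upper_ext n _ (fun z : n.-tuple step => Pc predT z)); last first.
  by move=> z; rewrite GM_Pc Pc_neg.
have hg' : Pc predT (negT g) by rewrite Pc_neg -GM_Pc.
rewrite (card_upper convex_T hg').
rewrite /occ size_tuple; apply: count_add4 => i; rewrite mem_iota => /andP[_ hi].
rewrite /valid /pat_up /= -map_drop; case: (drop i g) => [|a [|b t]]; first by [].
  by case: a.
by case: a; case: b; rewrite /= ?take0.
Qed.

Lemma motzkin_down n (g : n.-tuple step) : motzkin g ->
  #|lower_covers (fun x : n.-tuple step => motzkin x) g|
       = occ [:: U; H] g + occ [:: H; D] g + occ [:: U; D] g + occ_HH_star g.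
Proof.
move=> hg; rewrite card_lower.
rewrite (@upper_ext n _ (fun z : n.-tuple step => Pc (fun h => 0 <= - h)%R z)); last first.
  by move=> z; rewrite /= -[motzkin _]/(Pc (fun h => 0 <= h)%R _) Pc_neg.
have hg' : Pc (fun h => 0 <= - h)%R (negT g).
  by rewrite /= Pc_neg (Pc_ext _ (c' := fun h => 0 <= h)%R) // => h /=; rewrite opprK.
rewrite (card_upper convex_le0 hg').
rewrite /occ /occ_HH_star size_tuple; apply: count_add4 => i; rewrite mem_iota => /andP[_ hi].
rewrite /valid /pat_up /= -map_drop height_neg.
case e: (drop i g) => [|a [|b t]]; first by [].
  by case: a {e}.
have hs := size_drop i g; rewrite e /= size_tuple in hs.
have na : nth H g i = a by rewrite -[i]addn0 -nth_drop e.
have nb : nth H g i.+1 = b by rewrite -addn1 -nth_drop e.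
have e1 := @heightS g i; rewrite na size_tuple in e1.
have e2 := @heightS g i.+1; rewrite nb size_tuple in e2.
have p0 : (0 <= height g i)%R by apply: (Pc_height hg); rewrite size_tuple; lia.
have p2 : (0 <= height g i.+2)%R by apply: (Pc_height hg); rewrite size_tuple; lia.
have {}e1 := e1 ltac:(lia). have {}e2 := e2 ltac:(lia).
clear e na nb; case: a e1 => e1; case: b e2 => e2; rewrite /= ?take0 /=.
all: try by [].
all: try by have -> : (0 <= - (- height g i.+1 + 1))%R by rewrite /= in e1 e2; lia.
rewrite /= in e1; case: (eqVneq (height g i) 0%R) => q /=.
  have -> : (0 <= - (- height g i.+1 + 1))%R = false.
    by apply/negbTE; rewrite -ltNge; lia.
  by [].
by have -> : (0 <= - (- height g i.+1 + 1))%R by lia.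
Qed.

Theorem mainTheorem6 (n : nat) :
  (forall g : n.-tuple step, motzkin g ->
     #|upper_covers (fun x : n.-tuple step => motzkin x) g|
       = occ [:: H; U] g + occ [:: D; H] g + occ [:: D; U] g + occ [:: H; H] g
   /\ #|lower_covers (fun x : n.-tuple step => motzkin x) g|
       = occ [:: U; H] g + occ [:: H; D] g + occ [:: U; D] g + occ_HH_star g)
  /\
  (forall g : n.-tuple step, grand_motzkin g ->
     #|upper_covers (fun x : n.-tuple step => grand_motzkin x) g|
       = occ [:: H; U] g + occ [:: D; H] g + occ [:: D; U] g + occ [:: H; H] g
   /\ #|lower_covers (fun x : n.-tuple step => grand_motzkin x) g|
       = occ [:: U; H] g + occ [:: H; D] g + occ [:: U; D] g + occ [:: H; H] g).
Proof.
split=> g hg; split.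
- exact: motzkin_up.
- exact: motzkin_down.
- exact: gm_up.
- exact: gm_down.
Qed.
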